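(* Let $R$ be a finite Frobenius ring, $\chi,\chi'$ generating characters of $R$, $M=\{x_0=0,x_1,\ldots,x_n\}$ a finite $R$-bimodule, and $B$ a non-degenerate bilinear form on $M$. Then $H=[\chi(B(x_i,x_j))]_{0\le i,j\le n}$ and $H'=[\chi'(B(x_i,x_j))]_{0\le i,j\le n}$ are equivalent by a row permutation, i.e. $H'$ is obtained from $H$ by permuting its rows.
   Context: A bilinear form on $M$ is a biadditive map $B:M\times M\to R$ with $B(rx,y)=rB(x,y)$ and $B(x,yr)=B(x,y)r$; it is non-degenerate if its left and right kernels are zero. A character of $R$ is a group homomorphism $(R,+)\to\mathbb{C}^*$; it is generating if its kernel contains no nonzero left ideal and no nonzero right ideal of $R$. *)

(* Defs.v *)
From HB Require Import structures.
From mathcomp Require Import all_boot all_order all_algebra all_fingroup all_field.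
Set Implicit Arguments. Unset Strict Implicit. Unset Printing Implicit Defensive.
Import GRing.Theory Num.Theory.
Local Open Scope ring_scope.

Definition is_left_ideal (R : finNzRingType) (I : {set R}) : Prop :=
  0 \in I /\ (forall x y, x \in I -> y \in I -> x + y \in I) /\
  (forall x, x \in I -> - x \in I) /\ (forall r x, x \in I -> r * x \in I).

Definition is_right_ideal (R : finNzRingType) (I : {set R}) : Prop :=
  0 \in I /\ (forall x y, x \in I -> y \in I -> x + y \in I) /\
  (forall x, x \in I -> - x \in I) /\ (forall r x, x \in I -> x * r \in I).

(* A character of R: a group homomorphism (R,+) -> C^*  (C modelled by algC;
   the values of a character of a finite group are roots of unity, hence in algC). *)
Definition is_character (R : finNzRingType) (chi : R -> algC) : Prop :=
  (forall x, chi x != 0) /\ (forall x y, chi (x + y) = chi x * chi y).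

Definition char_kernel (R : finNzRingType) (chi : R -> algC) : {set R} :=
  [set x | chi x == 1].

Definition generating_character (R : finNzRingType) (chi : R -> algC) : Prop :=
  is_character chi /\
  (forall I : {set R}, is_left_ideal I -> I \subset char_kernel chi -> I = [set 0]) /\
  (forall I : {set R}, is_right_ideal I -> I \subset char_kernel chi -> I = [set 0]).

(* Finite Frobenius ring: by Wood's theorem, a finite ring is Frobenius iff it
   admits a generating character. *)
Definition frobenius_ring (R : finNzRingType) : Prop :=
  exists chi : R -> algC, generating_character chi.

Definition is_bimodule (R : finNzRingType) (M : finZmodType)
    (lact : R -> M -> M) (ract : M -> R -> M) : Prop :=
  (forall r x y, lact r (x + y) = lact r x + lact r y) /\
  (forall r s x, lact (r + s) x = lact r x + lact s x) /\
  (forall r s x, lact (r * s) x = lact r (lact s x)) /\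
  (forall x, lact 1 x = x) /\
  (forall r x y, ract (x + y) r = ract x r + ract y r) /\
  (forall r s x, ract x (r + s) = ract x r + ract x s) /\
  (forall r s x, ract x (r * s) = ract (ract x r) s) /\
  (forall x, ract x 1 = x) /\
  (forall r s x, ract (lact r x) s = lact r (ract x s)).

Definition is_bilinear_form (R : finNzRingType) (M : finZmodType)
    (lact : R -> M -> M) (ract : M -> R -> M) (B : M -> M -> R) : Prop :=
  [/\ forall x y z, B (x + y) z = B x z + B y z,
      forall x y z, B x (y + z) = B x y + B x z,
      forall r x y, B (lact r x) y = r * B x y
    & forall r x y, B x (ract y r) = B x y * r].

Definition non_degenerate (R : finNzRingType) (M : finZmodType) (B : M -> M -> R) : Prop :=
  (forall x, (forall y, B x y = 0) -> x = 0) /\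
  (forall y, (forall x, B x y = 0) -> y = 0).

Definition char_form_matrix (R : finNzRingType) (M : finZmodType) (n : nat)
    (chi : R -> algC) (B : M -> M -> R) (e : 'I_n.+1 -> M) : 'M[algC]_n.+1 :=
  \matrix_(i, j) chi (B (e i) (e j)).

(* Main.v *)
Require Import Defs.
From HB Require Import structures.
From mathcomp Require Import all_boot all_order all_algebra all_fingroup all_field.
Local Open Scope ring_scope.
Import GRing.Theory Num.Theory.

Section Aux.
Variable R : finNzRingType.

Lemma char_sum (M : finZmodType) (psi : M -> algC) :
  (forall a b, psi (a + b) = psi a * psi b) -> (exists a, psi a != 1) ->
  \sum_(y : M) psi y = 0.
Proof.
move=> hom [a ha].
have E : \sum_(y : M) psi y = psi a * \sum_(y : M) psi y.
  rewrite mulr_sumr (reindex_inj (addrI a)) /=.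
  by apply: eq_bigr => y _; rewrite hom.
have : (1 - psi a) * \sum_(y : M) psi y = 0 by rewrite mulrBl mul1r -E subrr.
move/eqP; rewrite mulf_eq0 subr_eq0 => /orP [h|/eqP //].
by rewrite eq_sym h in ha.
Qed.

Lemma chi0 (chi : R -> algC) : is_character chi -> chi 0 = 1.
Proof.
case=> nz hom.
apply: (mulIf (nz 0)); by rewrite mul1r -hom addr0.
Qed.

Lemma chiN (chi : R -> algC) (a : R) : is_character chi -> chi (- a) * chi a = 1.
Proof. move=> hc; have := hc; case=> _ hom; by rewrite -hom addNr chi0. Qed.
End Aux.

Section Bil.
Variables (R : finNzRingType) (M : finZmodType)
    (lact : R -> M -> M) (ract : M -> R -> M) (B : M -> M -> R).
Hypothesis hB : is_bilinear_form lact ract B.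
Hypothesis hnd : non_degenerate B.

Lemma B0r x : B x 0 = 0.
Proof.
case: hB => _ Bd _ _; apply: (addrI (B x 0)); by rewrite addr0 -Bd addr0.
Qed.
Lemma B0l x : B 0 x = 0.
Proof.
case: hB => Bd _ _ _; apply: (addrI (B 0 x)); by rewrite addr0 -Bd addr0.
Qed.
Lemma BNr x y : B x (- y) = - B x y.
Proof.
case: hB => _ Bd _ _; apply: (addrI (B x y)); by rewrite -Bd !subrr B0r.
Qed.
Lemma BNl x y : B (- x) y = - B x y.
Proof.
case: hB => Bd _ _ _; apply: (addrI (B x y)); by rewrite -Bd !subrr B0l.
Qed.

Lemma right_triv (chi : R -> algC) x : generating_character chi ->
  (forall y, chi (B x y) = 1) -> x = 0.
Proof.
case=> hc [_ hr] h.
have I0 := hr [set B x y | y : M].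
have hI : is_right_ideal [set B x y | y : M].
  case: hB => _ Bd _ Br.
  split; first by apply/imsetP; exists 0 => //; rewrite B0r.
  split. move=> a b /imsetP [y _ ->] /imsetP [z _ ->].
    by apply/imsetP; exists (y + z) => //; rewrite Bd.
  split. move=> a /imsetP [y _ ->]; by apply/imsetP; exists (- y) => //; rewrite BNr.
  move=> r a /imsetP [y _ ->]; by apply/imsetP; exists (ract y r) => //; rewrite Br.
have hs : [set B x y | y : M] \subset char_kernel chi.
  apply/subsetP => a /imsetP [y _ ->]; by rewrite inE h.
have := I0 hI hs => E.
case: hnd => nl _; apply: nl => y.
have : B x y \in [set B x y | y : M] by apply/imsetP; exists y.
by rewrite E inE => /eqP.
Qed.

Lemma left_triv (chi : R -> algC) y : generating_character chi ->
  (forall x, chi (B x y) = 1) -> y = 0.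
Proof.
case=> hc [hl _] h.
have I0 := hl [set B x y | x : M].
have hI : is_left_ideal [set B x y | x : M].
  case: hB => Bd _ Bl _.
  split; first by apply/imsetP; exists 0 => //; rewrite B0l.
  split. move=> a b /imsetP [u _ ->] /imsetP [z _ ->].
    by apply/imsetP; exists (u + z) => //; rewrite Bd.
  split. move=> a /imsetP [u _ ->]; by apply/imsetP; exists (- u) => //; rewrite BNl.
  move=> r a /imsetP [u _ ->]; by apply/imsetP; exists (lact r u) => //; rewrite Bl.
have hs : [set B x y | x : M] \subset char_kernel chi.
  apply/subsetP => a /imsetP [u _ ->]; by rewrite inE h.
have := I0 hI hs => E.
case: hnd => _ nr; apply: nr => x.
have : B x y \in [set B x y | x : M] by apply/imsetP; exists x.
by rewrite E inE => /eqP.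
Qed.

Lemma rows_inj (chi : R -> algC) x z : generating_character chi ->
  (forall y, chi (B x y) = chi (B z y)) -> x = z.
Proof.
move=> hg h; apply/eqP; rewrite -subr_eq0; apply/eqP.
apply: (right_triv _ _ hg) => y.
have hc : is_character chi by case: hg.
have := hc; case=> _ hom.
case: hB => Bd _ _ _.
by rewrite Bd BNl hom h mulrC chiN.
Qed.

Lemma row_exists (chi chi' : R -> algC) x : generating_character chi ->
  generating_character chi' -> exists z, forall y, chi' (B x y) = chi (B z y).
Proof.
move=> hg hg'.
have hc : is_character chi by case: hg.
have hc' : is_character chi' by case: hg'.
have := hc; case=> _ hom. have := hc'; case=> _ hom'.
case: hB => Bd Bd' _ _.
case: (boolP [exists z, [forall y, chi' (B x y) == chi (B z y)]]).
  by case/existsP => z /forallP h; exists z => y; apply/eqP.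
rewrite negb_exists => /forallP hn; exfalso.
pose P z := \sum_(y : M) chi' (B x y) * chi (B z (- y)).
have P0 z : P z = 0.
  apply: char_sum.
    by move=> a b; rewrite opprD !Bd' hom hom' mulrACA.
  have := hn z; rewrite negb_forall => /existsP [y hy]; exists y.
  apply: contra hy => /eqP e.
  by rewrite -[chi' _]mulr1 -(chiN _ _ (B z y) hc) mulrA -BNr e mul1r.
have S0 : \sum_(z : M) P z = 0 by rewrite big1.
move: S0; rewrite /P exchange_big /=.
under eq_bigr => y _ do rewrite -mulr_sumr.
rewrite (bigD1 0) //= [X in _ + X]big1; last first.
  move=> y hy; rewrite (@char_sum _ (fun z => chi (B z (- y)))) ?mulr0 //.
    by move=> a b; rewrite Bd hom.
  case: (boolP [exists a, chi (B a (- y)) != 1]) => [/existsP hh|]; first exact: hh.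
  rewrite negb_exists => /forallP hall.
  move: hy; rewrite -oppr_eq0 => /negP; case; apply/eqP.
  by apply: (left_triv _ _ hg) => u; apply/eqP/negPn; exact: hall.
rewrite addr0 B0r chi0 // mul1r.
under eq_bigr => z _ do rewrite oppr0 B0r chi0 //.
rewrite sumr_const => /eqP; rewrite pnatr_eq0 => /eqP hM.
have : (0 < #|M|)%N by apply/card_gt0P; exists 0.
by rewrite hM.
Qed.
End Bil.

Theorem propositionA4 (R : finNzRingType) (M : finZmodType)
    (lact : R -> M -> M) (ract : M -> R -> M) (B : M -> M -> R)
    (chi chi' : R -> algC) (n : nat) (e : 'I_n.+1 -> M) :
  frobenius_ring R ->
  generating_character chi -> generating_character chi' ->
  is_bimodule lact ract ->
  is_bilinear_form lact ract B -> non_degenerate B ->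
  bijective e -> e ord0 = 0 ->
  exists s : 'S_n.+1,
    char_form_matrix chi' B e = row_perm s (char_form_matrix chi B e).
Proof.
move=> _ hg hg' _ hB hnd [einv ee ee'] _.
have hx i : exists k, forall y, chi' (B (e i) y) = chi (B (e k) y).
  have [z hz] := @row_exists _ _ _ _ _ hB hnd _ _ (e i) hg hg'.
  by exists (einv z) => y; rewrite ee'.
have [g hgP] := fin_all_exists hx.
have ginj : injective g.
  move=> i i' eq; apply: (can_inj ee).
  apply: (@rows_inj _ _ _ _ _ hB hnd _ _ _ hg') => y.
  by rewrite hgP hgP eq.
exists (perm ginj); apply/matrixP => i j.
by rewrite !mxE permE hgP.
Qed.
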